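(* Let $a\in\mathbb{F}_q$ be nonzero, $n\geqslant 2$, and let $\mathcal{I}_n$ be the ideal of $\mathbb{F}_q[x_1,\dots,x_n]$ generated by $\mathcal{B}_n$. Then the set of common zeros of $\mathcal{I}_n$ in $\mathbb{F}_q^n$ is exactly $\mathcal{V}_n=\{v_0,v_1,\dots,v_n\}$, where $v_0=(0,\dots,0)$ and $v_k=\left(\binom{k}{1}a,\binom{k}{2}a^2,\dots,\binom{k}{k}a^k,0,\dots,0\right)\in\mathbb{F}_q^n$ for $1\leqslant k\leqslant n$. (These are precisely the values $(\xi_1(X),\dots,\xi_n(X))$ for $X$ ranging over $\{X\in\mathrm{M}(n,q):X^2=aX\}$, where $\det(\lambda I_n-X)=\lambda^n+\sum_{i=1}^n(-1)^i\xi_i(X)\lambda^{n-i}$.)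
   Context: $\mathbb{F}_q$ is the finite field with $q$ elements, and $\mathbb{F}_q[x_1,\dots,x_{n-1}]\subseteq\mathbb{F}_q[x_1,\dots,x_n]$. Define $\mathcal{B}_2=\{x_2^2-a^2x_2,\ x_2x_1-2ax_2,\ x_1^2-ax_1-2x_2\}\subseteq\mathbb{F}_q[x_1,x_2]$, and recursively for $n\geqslant 3$ $$\mathcal{B}_n=\left\{f-\frac{f(w_n)}{a^n}x_n : f\in\mathcal{B}_{n-1}\right\}\cup\left\{x_nx_i-\binom{n}{i}a^ix_n : i=1,\dots,n\right\},$$ where $w_n=\left(\binom{n}{1}a,\binom{n}{2}a^2,\dots,\binom{n}{n-1}a^{n-1}\right)\in\mathbb{F}_q^{n-1}$ and $f(w_n)$ denotes evaluation of $f\in\mathbb{F}_q[x_1,\dots,x_{n-1}]$ at $w_n$. *)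

(* Defs.v *)
From HB Require Import structures.
From mathcomp Require Import all_boot all_algebra.
From mathcomp Require Import mpoly.
Set Implicit Arguments. Unset Strict Implicit. Unset Printing Implicit Defensive.
Import GRing.Theory.
Local Open Scope ring_scope.

(* Variable x_{j+1} is 'X_j (j : 'I_n); F_q[x_1..x_{n-1}] is embedded in
   F_q[x_1..x_n] by mwiden. *)

Section Defs.
Variable F : finFieldType.
Variable a : F.

(* w_n = (C(n,1) a, ..., C(n,n-1) a^(n-1)) in F^(n-1), for n = m.+1 *)
Definition wpt (m : nat) : 'I_m -> F :=
  fun i => ('C(m.+1, i.+1))%:R * a ^+ i.+1.

Definition B2 : seq {mpoly F[2]} :=
  let x1 := 'X_(0 : 'I_2) in let x2 := 'X_(1 : 'I_2) in
  [:: x2 ^+ 2 - (a ^+ 2) *: x2;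
      x2 * x1 - (2%:R * a) *: x2;
      x1 ^+ 2 - a *: x1 - 2%:R *: x2].

(* Bgens m = B_{m+2}, a list of polynomials in F[x_1,...,x_{m+2}] *)
Fixpoint Bgens (m : nat) : seq {mpoly F[m.+2]} :=
  match m return seq {mpoly F[m.+2]} with
  | 0 => B2
  | k.+1 =>
    let xn : {mpoly F[k.+3]} := 'X_(@ord_max k.+2) in
    [seq mwiden f - (f.@[wpt (m:=k.+2)] / a ^+ k.+3) *: xn | f <- Bgens k]
    ++ [seq xn * 'X_i - (('C(k.+3, i.+1))%:R * a ^+ i.+1) *: xn
       | i <- enum 'I_k.+3]
  end.

Definition in_ideal_gen (R : comNzRingType) (S : seq R) (p : R) : Prop :=
  exists c : 'I_(size S) -> R, p = \sum_(i < size S) c i * S`_i.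

Definition vpt (n k : nat) : 'I_n -> F :=
  fun i => if (i.+1 <= k)%N then ('C(k, i.+1))%:R * a ^+ i.+1 else 0.

End Defs.

(* Main.v *)
Require Import Defs.
From HB Require Import structures.
From mathcomp Require Import all_boot all_algebra.
From mathcomp Require Import mpoly.
From mathcomp Require Import ring.
Local Open Scope ring_scope.
Import GRing.Theory.
Lemma ord2_ind (P : 'I_2 -> Prop) : P 0 -> P 1 -> forall i, P i.
Proof.
move=> P0 P1 [[|[|i]] Hi] //.
- by have -> : Ordinal Hi = 0 by apply: val_inj.
- by have -> : Ordinal Hi = 1 by apply: val_inj.
Qed.

Lemma base (F : finFieldType) (a : F) (v : 'I_2 -> F) :
  (forall f, f \in Bgens a 0 -> f.@[v] = 0) <->
  exists k : 'I_3, forall i : 'I_2, v i = ('C(k, i.+1))%:R * a ^+ i.+1.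
Proof.
have E1 : (('X_(1 : 'I_2) ^+ 2 - (a ^+ 2) *: 'X_(1 : 'I_2)) : {mpoly F[2]}).@[v]
   = v 1 * v 1 - a ^+ 2 * v 1 by rewrite mevalB mevalZ expr2 mevalM mevalXU.
have E2 : (('X_(1 : 'I_2) * 'X_(0 : 'I_2) - (2%:R * a) *: 'X_(1 : 'I_2)) : {mpoly F[2]}).@[v]
   = v 1 * v 0 - 2%:R * a * v 1 by rewrite mevalB mevalZ mevalM !mevalXU.
have E3 : (('X_(0 : 'I_2) ^+ 2 - a *: 'X_(0 : 'I_2) - 2%:R *: 'X_(1 : 'I_2)) : {mpoly F[2]}).@[v]
   = v 0 * v 0 - a * v 0 - 2%:R * v 1 by rewrite !mevalB !mevalZ expr2 mevalM !mevalXU.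
split.
- move=> H.
  have H1 := H _ (mem_head _ _); rewrite E1 in H1.
  have H2 : v 1 * v 0 - 2%:R * a * v 1 = 0.
    by rewrite -E2; apply: H; rewrite !inE eqxx orbT.
  have H3 : v 0 * v 0 - a * v 0 - 2%:R * v 1 = 0.
    by rewrite -E3; apply: H; rewrite !inE eqxx !orbT.
  have [z|nz] := eqVneq (v 1) 0.
  + have : v 0 * (v 0 - a) = 0 by rewrite -H3 z; ring.
    move/eqP; rewrite mulf_eq0 subr_eq0 => /orP [/eqP h0|/eqP h0].
    * exists (@Ordinal 3 0 erefl); apply: ord2_ind => /=.
        by rewrite h0 bin0n mul0r.
      by rewrite z bin0n mul0r.
    * exists (@Ordinal 3 1 erefl); apply: ord2_ind => /=.
        by rewrite h0 bin1 mul1r expr1.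
      by rewrite z mul0r.
  + have e1 : v 1 = a ^+ 2.
      by apply/eqP; rewrite -subr_eq0; apply/eqP/(mulfI nz); rewrite mulr0 -H1; ring.
    have e0 : v 0 = 2%:R * a.
      by apply/eqP; rewrite -subr_eq0; apply/eqP/(mulfI nz); rewrite mulr0 -H2; ring.
    exists (@Ordinal 3 2 erefl); apply: ord2_ind => /=.
      by rewrite e0 expr1.
    by rewrite e1 binn mul1r.
- case=> k Hk f.
  have e0 : v 0 = ('C(k, 1))%:R * a ^+ 1 := Hk 0.
  have e1 : v 1 = ('C(k, 2))%:R * a ^+ 2 := Hk 1.
  clear Hk; rewrite !inE => /or3P [/eqP->|/eqP->|/eqP->].
  + rewrite E1 ?e0 ?e1; case: k {e0 e1} => [[|[|[|k]]] hk] //=; rewrite ?bin0n /= ?bin1 ?binn ?bin_small //; ring.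
  + rewrite E2 ?e0 ?e1; case: k {e0 e1} => [[|[|[|k]]] hk] //=; rewrite ?bin0n /= ?bin1 ?binn ?bin_small //; ring.
  + rewrite E3 ?e0 ?e1; case: k {e0 e1} => [[|[|[|k]]] hk] //=; rewrite ?bin0n /= ?bin1 ?binn ?bin_small //; ring.
Qed.
Lemma meval_mwiden (F : comNzRingType) n (p : {mpoly F[n]}) (v : 'I_n.+1 -> F) :
  (mwiden p).@[v] = p.@[fun i => v (widen_ord (leqnSn n) i)].
Proof.
elim/mpolyind: p => [|c m p _ _ IH]; first by rewrite mwiden0 !meval0.
rewrite mwidenD mwidenZ !mevalD !mevalZ IH mwidenX !mevalX big_ord_recr /= mnmwiden_ordmax expr0 mulr1.
congr (_ * _ + _); apply: eq_bigr => i _; by rewrite mnmwiden_widen.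
Qed.

Lemma zeros_B (F : finFieldType) (a : F) (ha : a != 0) m (v : 'I_m.+2 -> F) :
  (forall f, f \in Bgens a m -> f.@[v] = 0) <->
  exists k : 'I_m.+3, forall i : 'I_m.+2, v i = ('C(k, i.+1))%:R * a ^+ i.+1.
Proof.
elim: m v => [|k IH] v; first exact: base.
pose v' := fun i : 'I_k.+2 => v (widen_ord (leqnSn _) i).
pose xn := v ord_max.
have Ef : forall g c, (mwiden g - c *: ('X_(@ord_max k.+2) : {mpoly F[k.+3]})).@[v]
    = g.@[v'] - c * xn.
  by move=> g c; rewrite mevalB mevalZ mevalXU meval_mwiden.
have Eg : forall (i : 'I_k.+3) d, (('X_(@ord_max k.+2) : {mpoly F[k.+3]}) * 'X_i - d *: 'X_(@ord_max k.+2)).@[v]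
    = xn * v i - d * xn.
  by move=> i d; rewrite mevalB mevalZ mevalM !mevalXU.
have memB : forall f, f \in Bgens a k.+1 ->
   (exists2 g, g \in Bgens a k & f = mwiden g - (g.@[wpt a (m:=k.+2)] / a ^+ k.+3) *: 'X_(@ord_max k.+2))
   \/ (exists i : 'I_k.+3, f = 'X_(@ord_max k.+2) * 'X_i - (('C(k.+3, i.+1))%:R * a ^+ i.+1) *: 'X_(@ord_max k.+2)).
  move=> f; rewrite /= mem_cat => /orP [/mapP [g gB ->]|/mapP [i _ ->]].
    by left; exists g.
  by right; exists i.
split.
- move=> H.
  have Hs : forall i : 'I_k.+3, xn * v i - ('C(k.+3, i.+1))%:R * a ^+ i.+1 * xn = 0.
    move=> i; rewrite -Eg; apply: H; rewrite /= mem_cat; apply/orP; right.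
    by apply: map_f; rewrite mem_enum.
  have [z|nz] := eqVneq xn 0.
  + have H' : forall g, g \in Bgens a k -> g.@[v'] = 0.
      move=> g gB.
      have := H (mwiden g - (g.@[wpt a (m:=k.+2)] / a ^+ k.+3) *: 'X_(@ord_max k.+2)).
      rewrite Ef z mulr0 subr0; apply; rewrite /= mem_cat; apply/orP; left.
      by apply: map_f.
    have [j Hj] := (IH v').1 H'.
    exists (widen_ord (leqnSn _) j) => i /=.
    have [lt|ge] := ltnP i k.+2.
    * have -> : i = widen_ord (leqnSn _) (Ordinal lt) by apply: val_inj.
      exact: Hj.
    * have -> : i = ord_max by apply: val_inj => /=; apply/eqP; rewrite eqn_leq ge -ltnS ltn_ord.
      by rewrite bin_small ?mul0r //= ltnS; apply: (leq_trans (ltn_ord j)).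
  + exists ord_max => i /=.
    apply/eqP; rewrite -subr_eq0; apply/eqP/(mulfI nz); rewrite mulr0 -(Hs i); ring.
- case=> j Hj f /memB.
  have Exn : xn = ('C(j, k.+3))%:R * a ^+ k.+3 := Hj ord_max.
  have [lt|ge] := ltnP j k.+3.
  + have xn0 : xn = 0 by rewrite Exn bin_small ?mul0r.
    case=> [[g gB ->]|[i ->]].
    * rewrite Ef xn0 mulr0 subr0; apply: (IH v').2 gB.
      by exists (Ordinal lt) => i; exact: Hj.
    * by rewrite Eg xn0; ring.
  + have jE : nat_of_ord j = k.+3 by apply/eqP; rewrite eqn_leq ge -ltnS ltn_ord.
    have xnE : xn = a ^+ k.+3 by rewrite Exn jE binn mul1r.
    case=> [[g gB ->]|[i ->]].
    * rewrite Ef xnE divfK ?expf_neq0 // (@meval_eq _ _ v' (wpt a (m:=k.+2))) ?subrr //.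
      by move=> i; rewrite /v' Hj jE.
    * by rewrite Eg xnE Hj jE; ring.
Qed.
Lemma ideal_zero (F : comNzRingType) n (S : seq {mpoly F[n]}) v :
  (forall p, in_ideal_gen S p -> p.@[v] = 0) <-> (forall f, f \in S -> f.@[v] = 0).
Proof.
split.
- move=> H f fS; apply: H.
  have hi : (index f S < size S)%N by rewrite index_mem.
  exists (fun j => if j == Ordinal hi then 1 else 0).
  rewrite (bigD1 (Ordinal hi)) //= eqxx mul1r nth_index // big1 ?addr0 // => j /negbTE ->.
  by rewrite mul0r.
- move=> H p [c ->]; rewrite raddf_sum /=; apply: big1 => i _.
  by rewrite mevalM (H S`_i) ?mulr0 // mem_nth.
Qed.

Lemma vptE (F : finFieldType) (a : F) n k (i : 'I_n) :
  vpt a k i = ('C(k, i.+1))%:R * a ^+ i.+1.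
Proof.
rewrite /vpt; case: ifP => // /negbT; rewrite -ltnNge => h.
by rewrite bin_small // mul0r.
Qed.

Theorem theorem4p7 (F : finFieldType) (a : F) (m : nat) :
  a != 0 ->
  forall v : 'I_m.+2 -> F,
    (forall p : {mpoly F[m.+2]}, in_ideal_gen (Bgens a m) p -> p.@[v] = 0)
    <-> (exists k : 'I_m.+3, forall i, v i = @vpt F a m.+2 k i).
Proof.
move=> ha v; rewrite ideal_zero zeros_B //.
split; case=> k Hk; exists k => i; by rewrite Hk vptE.
Qed.
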